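(* Let $H\le G_{d,k}$. Then $\widetilde{\mathfrak X}_{d,k}(H)$ is a simplicial complex (every cell has multiplicity $1$) if and only if $H$ satisfies the intersection property: for every nonempty $J\subseteq[\![d]\!]$ and every $g\in G_{d,k}$, $$\bigcap_{i\in J}\mathcal A_{[K_{\widehat i}g]_H}=\mathcal A_{[K_{\widehat J}g]_H}.$$ If moreover $H$ is normal in $G_{d,k}$, then $\widetilde{\mathfrak X}_{d,k}(H)$ is a simplicial complex if and only if this equality holds for every nonempty $J$ with $g=e$.
   Context: Fix $d,k\ge1$, $[\![d]\!]=\{0,\dots,d\}$. $G_{d,k}=\langle\alpha_0,\dots,\alpha_d\mid\alpha_i^k=e\rangle$; for $J\subseteq[\![d]\!]$, $K_J=\langle\alpha_j:j\in J\rangle$, $\widehat J=[\![d]\!]\setminus J$, $\widehat i=\widehat{\{i\}}$. For $H\le G_{d,k}$, $[K_{\widehat J}g]_H=\{K_{\widehat J}gh:h\in H\}$ and $\mathcal A_{[K_{\widehat J}g]_H}=\{g'\in G_{d,k}:[K_{\widehat J}g']_H=[K_{\widehat J}g]_H\}$. The multicomplex $\widetilde{\mathfrak X}_{d,k}(H)$ has as multicells of dimension $|J|-1$ the classes $[K_{\widehat J}g]_H$, the multicell $[K_{\widehat J}g]_H$ lying over the cell $\Phi([K_{\widehat J}g]_H)=\{[K_{\widehat i}g]_H:i\in J\}$ (well defined); the multiplicity of a cell $\sigma$ is $|\Phi^{-1}(\sigma)|$. Thus $\widetilde{\mathfrak X}_{d,k}(H)$ is a simplicial complex iff $\Phi$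 is injective. *)

(* Defs.v *)
(* The group G_{d,k} = free product of d+1 copies of Z/k is
   infinite, so it is modelled concretely by its normal form: reduced words. *)
From mathcomp Require Import all_boot.
Set Implicit Arguments. Unset Strict Implicit. Unset Printing Implicit Defensive.

(* A letter (i, a) stands for alpha_i ^ a, with i in [[d]] = 'I_(d+1). *)
Definition letter (d : nat) := ('I_d.+1 * nat)%type.
Definition word (d : nat) := seq (letter d).

Definition reduced (d k : nat) (w : word d) : bool :=
  all (fun p : letter d => (0 < p.2 < k)%N) w &&
  sorted (fun p q : letter d => p.1 != q.1) w.

Definition cons_letter (d k : nat) (l : letter d) (w : word d) : word d :=
  let a := (l.2 %% k)%N in
  if a == 0%N then w else
  match w with
  | [::] => [:: (l.1, a)]
  | p :: w' =>
      if l.1 == p.1 then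
        let c := ((a + p.2) %% k)%N in
        if c == 0%N then w' else (l.1, c) :: w'
      else (l.1, a) :: w
  end.

Definition gmul (d k : nat) (x y : word d) : word d :=
  foldr (@cons_letter d k) y x.
Definition gone (d : nat) : word d := [::].
Definition ginv (d k : nat) (x : word d) : word d :=
  map (fun p : letter d => (p.1, (k - p.2)%N)) (rev x).

Definition is_subgroup (d k : nat) (H : word d -> Prop) : Prop :=
  (forall x, H x -> reduced k x) /\
  H (gone d) /\
  (forall x y, H x -> H y -> H (gmul k x y)) /\
  (forall x, H x -> H (ginv k x)).

Definition is_normal (d k : nat) (H : word d -> Prop) : Prop :=
  forall x h, reduced k x -> H h -> H (gmul k (gmul k (ginv k x) h) x).

Definition inK (d k : nat) (J : {set 'I_d.+1}) (g : word d) : Prop :=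
  exists s : word d, all (fun p : letter d => p.1 \in J) s /\ gmul k s (gone d) = g.

Definition rcoset_eq (d k : nat) (J : {set 'I_d.+1}) (x y : word d) : Prop :=
  forall z, reduced k z ->
    ((exists c, inK k J c /\ z = gmul k c x) <-> (exists c, inK k J c /\ z = gmul k c y)).

(* [K_{hat J} g]_H = [K_{hat J} g']_H, equality of the sets of cosets
   {K_{hat J} g h : h in H}.  Here Jh is the complement hat J. *)
Definition class_eq (d k : nat) (H : word d -> Prop) (Jh : {set 'I_d.+1})
  (g g' : word d) : Prop :=
  (forall h, H h -> exists h', H h' /\ rcoset_eq k Jh (gmul k g h) (gmul k g' h')) /\
  (forall h', H h' -> exists h, H h /\ rcoset_eq k Jh (gmul k g h) (gmul k g' h')).

Definition inA (d k : nat) (H : word d -> Prop) (Jh : {set 'I_d.+1}) (g g' : word d)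
  : Prop := reduced k g' /\ class_eq k H Jh g' g.

(* Multicells of dimension |J|-1: pairs (J, g) (J nonempty) up to
   [K_{hat J} g]_H = [K_{hat J'} g']_H.  Phi sends it to the cell
   { (i, [K_{hat i} g]_H) : i in J } (vertices carry their type i). *)
Definition multicell_eq (d k : nat) (H : word d -> Prop)
  (J : {set 'I_d.+1}) (g : word d) (J' : {set 'I_d.+1}) (g' : word d) : Prop :=
  J = J' /\ class_eq k H (~: J) g g'.

Definition Phi_eq (d k : nat) (H : word d -> Prop)
  (J : {set 'I_d.+1}) (g : word d) (J' : {set 'I_d.+1}) (g' : word d) : Prop :=
  J = J' /\ (forall i, i \in J -> class_eq k H [set~ i] g g').

(* X~_{d,k}(H) is a simplicial complex iff Phi is injective on multicells. *)
Definition is_simplicial (d k : nat) (H : word d -> Prop) : Prop :=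
  forall (J J' : {set 'I_d.+1}) (g g' : word d),
    J != set0 -> J' != set0 -> reduced k g -> reduced k g' ->
    Phi_eq k H J g J' g' -> multicell_eq k H J g J' g'.

Definition intersection_eq (d k : nat) (H : word d -> Prop)
  (J : {set 'I_d.+1}) (g : word d) : Prop :=
  forall g', (forall i, i \in J -> inA k H [set~ i] g g') <-> inA k H (~: J) g g'.

Definition intersection_property (d k : nat) (H : word d -> Prop) : Prop :=
  forall (J : {set 'I_d.+1}) (g : word d), J != set0 -> reduced k g ->
    intersection_eq k H J g.

(* Main.v *)
Require Import Defs.
From mathcomp Require Import all_boot.
Set Implicit Arguments. Unset Strict Implicit.

Set Warnings "-notation-overridden".
Lemma reduced_cons d k (p : letter d) w :
  reduced k (p :: w) = [&& 0 < p.2 < k, reduced k w & if w is q :: _ then p.1 != q.1 else true].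
Proof.
rewrite /reduced /=; case: w => [|q w] /=; first by rewrite !andbT.
by case: (0 < p.2 < k); case: (0 < q.2 < k); case: all; case: (p.1 != q.1); case: path.
Qed.

Lemma consR d k (hk : 0 < k) (l : letter d) (w : word d) :
  reduced k w -> reduced k (cons_letter k l w).
Proof.
case: l => i b; rewrite /cons_letter /=.
case: eqP => [//|/eqP a0] rw.
case: w rw => [|p w] rw; first by rewrite reduced_cons /= lt0n a0 ltn_pmod.
move: rw; rewrite reduced_cons => /and3P [hp rw hw].
case: eqP => [ei|/eqP ne].
  case: eqP => [_|/eqP c0]; first by [].
  rewrite reduced_cons /= lt0n c0 ltn_pmod // rw /=.
  by case: w hw {rw} => // q w; rewrite ei.
by rewrite reduced_cons /= lt0n a0 ltn_pmod //= reduced_cons hp rw hw.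
Qed.

Lemma mulR d k (hk : 0 < k) (x y : word d) : reduced k y -> reduced k (gmul k x y).
Proof. by move=> ry; elim: x => //= l x IH; apply: consR. Qed.

Lemma cons_mod d k (i : 'I_d.+1) x y w : x %% k = y %% k ->
  cons_letter k (i, x) w = cons_letter k (i, y) w.
Proof. by rewrite /cons_letter /= => ->. Qed.

Lemma consM d k (hk : 0 < k) (i : 'I_d.+1) a b (w : word d) : reduced k w ->
  cons_letter k (i, a) (cons_letter k (i, b) w) = cons_letter k (i, a + b) w.
Proof.
move=> rw.
have [b0|bn0] := eqVneq (b %% k) 0.
  rewrite /cons_letter /= b0 /=; rewrite -modnDm b0 addn0 modn_mod //.
have [a0|an0] := eqVneq (a %% k) 0.
  rewrite {1}/cons_letter /= a0 /=; rewrite (@cons_mod _ _ _ (a+b) b) //.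
  by rewrite -modnDm a0 add0n modn_mod.
rewrite {2}/cons_letter /= (negbTE bn0).
case: w rw => [|p w] rw.
  by rewrite /cons_letter /= (negbTE an0) eqxx /= modnDm.
move: rw; rewrite reduced_cons => /and3P [/andP [p0 pk] rw hw].
have p2 : p.2 %% k = p.2 by rewrite modn_small.
case: p p0 pk hw p2 => j x /= p0 pk hw p2.
have [ei|ne] := eqVneq i j.
  subst j; rewrite modnDml.
  have [c0|c0] := eqVneq ((b + x) %% k) 0.
    rewrite /cons_letter /= (negbTE an0) eqxx.
    have e1 : ((a + b) %% k + x) %% k = a %% k.
      by rewrite modnDml -addnA -modnDmr c0 addn0.
    rewrite e1 (negbTE an0).
    have [ab0|ab0] := eqVneq ((a + b) %% k) 0.
      have ex : x = a %% k by rewrite -e1 ab0 add0n p2.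
      by case: w {rw} hw => [|q w] /= hw; rewrite ?(negbTE hw) ex.
    by case: w {rw} hw => [|q w] /= hw; rewrite ?(negbTE hw).
  rewrite /cons_letter /= (negbTE an0) eqxx modnDmr addnA.
  rewrite -addnA modnDml addnA -(modnDml (a + b)).
  have [ab0|ab0] := eqVneq ((a + b) %% k) 0 => //=.
  by rewrite ab0 add0n p2; move: p0; rewrite lt0n => /negbTE ->.
rewrite /cons_letter /= ifN // eqxx modnDm.
have [ab0|ab0] := eqVneq ((a + b) %% k) 0 => //=.
by rewrite (negbTE ne).
Qed.

Lemma cons0 d k (i : 'I_d.+1) b (w : word d) : b %% k = 0 -> cons_letter k (i, b) w = w.
Proof. by rewrite /cons_letter /= => ->. Qed.

Lemma consL d k (hk : 0 < k) (l : letter d) (u w : word d) : reduced k u -> reduced k w ->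
  gmul k (cons_letter k l u) w = cons_letter k l (gmul k u w).
Proof.
case: l => i b ru rw.
have [b0|bn0] := eqVneq (b %% k) 0; first by rewrite !cons0.
rewrite {1}/cons_letter /= (negbTE bn0).
case: u ru => [|p u] ru.
  by rewrite /= (@cons_mod _ _ _ (b %% k) b) // modn_mod.
move: ru; rewrite reduced_cons => /and3P [_ ru _].
case: p => j x /=.
have [ei|ne] := eqVneq i j.
  subst j; rewrite consM ?mulR //.
  have [c0|c0] := eqVneq ((b %% k + x) %% k) 0.
    by rewrite cons0 // -modnDml.
  by rewrite /= (@cons_mod _ _ _ _ (b + x)) // modn_mod modnDml.
by rewrite /= (@cons_mod _ _ _ (b %% k) b) // modn_mod.
Qed.

Lemma mulA d k (hk : 0 < k) (x y w : word d) : reduced k y -> reduced k w ->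
  gmul k (gmul k x y) w = gmul k x (gmul k y w).
Proof.
move=> ry rw; elim: x => //= l x IH.
by rewrite consL ?mulR // IH.
Qed.

Lemma mulr1 d k (x : word d) : reduced k x -> gmul k x (gone d) = x.
Proof.
elim: x => // p x IH; rewrite reduced_cons => /and3P [/andP [p0 pk] rx hx] /=.
rewrite IH // /cons_letter modn_small // ifN; last by rewrite -lt0n.
by case: x {IH rx} hx => [|q x] hx; rewrite -?surjective_pairing // ifN // -surjective_pairing.
Qed.

Lemma invR d k (x : word d) : reduced k x -> reduced k (ginv k x).
Proof.
rewrite /reduced /ginv all_map sorted_map rev_sorted all_rev => /andP [ha hs].
apply/andP; split.
  apply: sub_all ha => p /= /andP [p0 pk]; apply/andP; split; rewrite ?subn_gt0 //.
  by rewrite ltn_subrL p0 (leq_trans _ pk).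
by apply: sub_sorted hs => p q /=; rewrite eq_sym.
Qed.

Lemma ginv_cons d k (p : letter d) x :
  ginv k (p :: x) = rcons (ginv k x) (p.1, k - p.2).
Proof. by rewrite /ginv rev_cons map_rcons. Qed.

Lemma mulVr d k (hk : 0 < k) (x : word d) : reduced k x -> gmul k (ginv k x) x = gone d.
Proof.
elim: x => // p x IH; rewrite reduced_cons => /and3P [/andP [p0 pk] rx _].
rewrite ginv_cons /gmul foldr_rcons -/(gmul k _ _).
have -> : cons_letter k (p.1, k - p.2) (p :: x) = x.
  have h1 : (k - p.2) %% k = k - p.2.
    by rewrite modn_small // ltn_subrL p0 hk.
  have h2 : (k - p.2 == 0) = false by rewrite subn_eq0 leqNgt pk.
  by rewrite /cons_letter /= h1 h2 eqxx (subnK (ltnW pk)) modnn.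
exact: IH.
Qed.

Lemma invK d k (x : word d) : reduced k x -> ginv k (ginv k x) = x.
Proof.
move=> /andP [ha _]; rewrite /ginv [in rev (map _ (rev x))]map_rev revK -map_comp.
elim: x ha => //= p x IH /andP [/andP [_ pk] ha].
by rewrite IH // (subKn (ltnW pk)) -surjective_pairing.
Qed.

Lemma mulrV d k (hk : 0 < k) (x : word d) : reduced k x -> gmul k x (ginv k x) = gone d.
Proof. by move=> rx; rewrite -{1}(invK rx) mulVr // invR. Qed.

Lemma consA d k (A : {set 'I_d.+1}) (l : letter d) (w : word d) :
  l.1 \in A -> all (fun p : letter d => p.1 \in A) w ->
  all (fun p : letter d => p.1 \in A) (cons_letter k l w).
Proof.
case: l => i b /= iA hw; rewrite /cons_letter /=.
case: ifP => // _; case: w hw => [|p w] /=; first by move=> _; rewrite iA.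
move=> /andP [pA hw]; case: ifP => _; first by case: ifP => _ /=; rewrite ?iA ?hw.
by rewrite /= iA pA hw.
Qed.

Lemma inK_char d k (hk : 0 < k) (A : {set 'I_d.+1}) (c : word d) :
  inK k A c <-> reduced k c /\ all (fun p : letter d => p.1 \in A) c.
Proof.
split.
  move=> [s [hs <-]]; split; first exact: mulR.
  by elim: s hs => //= l s IH /andP [lA hs]; apply: consA => //; apply: IH.
by move=> [rc ac]; exists c; split => //; rewrite mulr1.
Qed.

Definition co d k (A : {set 'I_d.+1}) (x y : word d) :=
  exists c, inK k A c /\ x = gmul k c y.

Lemma mul_all d k (A : {set 'I_d.+1}) (s w : word d) :
  all (fun p : letter d => p.1 \in A) s -> all (fun p : letter d => p.1 \in A) w ->
  all (fun p : letter d => p.1 \in A) (gmul k s w).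
Proof. by move=> hs hw; elim: s hs => //= l s IH /andP [lA hs]; apply: consA => //; apply: IH. Qed.

Lemma inK1 d k (A : {set 'I_d.+1}) : inK k A (gone d).
Proof. by exists [::]. Qed.

Lemma inKM d k (hk : 0 < k) (A : {set 'I_d.+1}) c c' :
  inK k A c -> inK k A c' -> inK k A (gmul k c c').
Proof.
move=> /(inK_char hk) [rc ac] /(inK_char hk) [rc' ac'].
by apply/(inK_char hk); split; [apply: mulR | apply: mul_all].
Qed.

Lemma inKV d k (hk : 0 < k) (A : {set 'I_d.+1}) c : inK k A c -> inK k A (ginv k c).
Proof.
move=> /(inK_char hk) [rc ac]; apply/(inK_char hk); split; first exact: invR.
by rewrite /ginv all_map all_rev.
Qed.

Lemma inKR d k (hk : 0 < k) (A : {set 'I_d.+1}) c : inK k A c -> reduced k c.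
Proof. by move=> /(inK_char hk) []. Qed.

Lemma rc_co d k (hk : 0 < k) (A : {set 'I_d.+1}) (x y : word d) :
  reduced k x -> reduced k y -> (rcoset_eq k A x y <-> co k A x y).
Proof.
move=> rx ry; split.
  move=> h; have [/(_ (ex_intro _ (gone d) (conj (inK1 _ _) erefl))) [c [hc ->]] _] := h x rx.
  by exists c.
move=> [c [hc ->]] z rz; split.
  move=> [c' [hc' ->]]; exists (gmul k c' c); split; first exact: inKM.
  by rewrite mulA // (inKR hk hc).
move=> [c' [hc' ->]]; exists (gmul k c' (ginv k c)); split; first by apply: inKM => //; apply: inKV.
have rc := inKR hk hc.
rewrite mulA ?invR ?mulR // -(mulA hk (ginv k c) rc ry) mulVr //.
Qed.

Lemma co_mono d k (hk : 0 < k) (A B : {set 'I_d.+1}) (x y : word d) :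
  A \subset B -> co k A x y -> co k B x y.
Proof.
move=> /subsetP sAB [c [/(inK_char hk) [rc ac] ->]]; exists c; split => //.
by apply/(inK_char hk); split => //; apply: sub_all ac => p /sAB.
Qed.

Lemma co_r d k (hk : 0 < k) (A : {set 'I_d.+1}) (x y g : word d) :
  reduced k y -> reduced k g -> co k A x y -> co k A (gmul k x g) (gmul k y g).
Proof. by move=> ry rg [c [hc ->]]; exists c; split => //; rewrite mulA. Qed.

Lemma ce_char d k (hk : 0 < k) (H : word d -> Prop) (HH : is_subgroup k H)
  (A : {set 'I_d.+1}) (g g' : word d) : reduced k g -> reduced k g' ->
  (class_eq k H A g g' <-> exists h, H h /\ co k A g (gmul k g' h)).
Proof.
case: HH => [HR [H1 [HM HV]]] rg rg'; split.
  move=> [h1 _]; have [h [Hh hc]] := h1 _ H1; rewrite mulr1 in hc => //.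
  have rh := HR _ Hh; exists h; split => //; apply/(rc_co hk) => //; exact: mulR.
move=> [h0 [Hh0 [c [hc eg]]]].
have rh0 := HR _ Hh0; have rc := inKR hk hc.
split.
  move=> h Hh; exists (gmul k h0 h); split; first exact: HM.
  have rh := HR _ Hh.
  apply/rc_co => //; try (apply: mulR; auto).
  exists c; split => //; rewrite eg mulA ?mulR // mulA // mulA //.
move=> h' Hh'; exists (gmul k (ginv k h0) h'); split; first by apply: HM => //; apply: HV.
have rh' := HR _ Hh'.
apply/rc_co => //; try (apply: mulR; auto).
exists c; split => //; rewrite eg.
have ri : reduced k (gmul k (ginv k h0) h') by apply: mulR.
rewrite (mulA hk c) ?mulR // (mulA hk g') //.
by rewrite -(mulA hk h0 (invR rh0) rh') mulrV.
Qed.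

Lemma ce_transl d k (hk : 0 < k) (H : word d -> Prop) (HH : is_subgroup k H)
  (Hn : is_normal k H) (A : {set 'I_d.+1}) (x y : word d) : reduced k x -> reduced k y ->
  (class_eq k H A x y <-> class_eq k H A (gmul k x (ginv k y)) (gone d)).
Proof.
move=> rx ry; have ryi := invR ry.
have rxy : reduced k (gmul k x (ginv k y)) by apply: mulR.
have HR := HH.1.
have r1 : reduced k (gone d) by [].
split.
  move=> /(ce_char hk HH A rx ry) [h [Hh [c [hc ex]]]]; have rh := HR _ Hh.
  apply/(ce_char hk HH A rxy r1).
  exists (gmul k (gmul k y h) (ginv k y)); split.
    by have := Hn _ _ ryi Hh; rewrite invK.
  exists c; split => //=; rewrite ex (mulA hk c) //; apply: mulR => //.
move=> /(ce_char hk HH A rxy r1) [h [Hh [c [hc ex]]]]; have rh := HR _ Hh; have rc := inKR hk hc.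
apply/(ce_char hk HH A rx ry).
exists (gmul k (gmul k (ginv k y) h) y); split; first exact: Hn.
exists c; split => //.
have -> : x = gmul k (gmul k x (ginv k y)) y by rewrite (mulA hk x) // mulVr // mulr1.
rewrite ex (mulA hk c) //.
have rih : reduced k (gmul k (ginv k y) h) by apply: mulR.
rewrite -(mulA hk y rih ry) -(mulA hk y ryi rh) mulrV //.
Qed.

Lemma ce_mono d k (hk : 0 < k) (H : word d -> Prop) (HH : is_subgroup k H)
  (A B : {set 'I_d.+1}) (g g' : word d) : reduced k g -> reduced k g' ->
  A \subset B -> class_eq k H A g g' -> class_eq k H B g g'.
Proof.
move=> rg rg' sAB /(ce_char hk HH A rg rg') [h [Hh hc]].
by apply/(ce_char hk HH B rg rg'); exists h; split => //; apply: co_mono hc.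
Qed.

Lemma sub_compl d (J : {set 'I_d.+1}) i : i \in J -> ~: J \subset [set~ i].
Proof. by move=> iJ; apply/subsetP => x; rewrite !inE; apply: contra => /eqP ->. Qed.

Lemma part1 d k (hk : 0 < k) (H : word d -> Prop) (HH : is_subgroup k H) :
  is_simplicial k H <-> intersection_property k H.
Proof.
split.
  move=> hs J g hJ rg g'; split.
    move=> hall; have /set0Pn [i iJ] := hJ; have [rg' _] := hall i iJ.
    split => //.
    have [_ ce] := hs J J g' g hJ hJ rg' rg (conj erefl (fun i iJ => (hall i iJ).2)).
    exact: ce.
  move=> [rg' ce] i iJ; split => //; apply: (ce_mono hk HH) ce => //; exact: sub_compl.
move=> hip J J' g g' hJ hJ' rg rg' [eJ hall]; split => //.
by have [_ ce] := (hip J g' hJ rg' g).1 (fun i iJ => conj rg (hall i iJ)).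
Qed.

Unset Implicit Arguments. Set Strict Implicit.

Theorem proposition9 (d k : nat) (hd : (1 <= d)%N) (hk : (1 <= k)%N)
  (H : word d -> Prop) (HH : is_subgroup k H) :
  (is_simplicial k H <-> intersection_property k H) /\
  (is_normal k H ->
     (is_simplicial k H <->
      forall J : {set 'I_d.+1}, J != set0 -> intersection_eq k H J (gone d))).
Proof.
have p1 := part1 hk HH.
split => // Hn; split.
  by move=> hs J hJ; apply: (p1.1 hs) J (gone d) hJ _.
move=> he; apply/p1 => J g hJ rg g'; split; last first.
  move=> [rg' ce] i iJ; split => //; apply: (ce_mono hk HH) ce => //; exact: sub_compl.
move=> hall; have /set0Pn [i0 iJ0] := hJ; have [rg' _] := hall i0 iJ0.
split => //.
have rxy : reduced k (gmul k g' (ginv k g)) := mulR hk _ (invR rg).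
have [_ ce] := (he J hJ (gmul k g' (ginv k g))).1
  (fun i iJ => conj rxy ((ce_transl hk HH Hn _ rg' rg).1 (hall i iJ).2)).
exact: (ce_transl hk HH Hn _ rg' rg).2.
Qed.
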